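(* Let $(H,\cdot,1,\Delta,\epsilon,S,\rightharpoonup)$ be a Yetter--Drinfeld post-Hopf algebra and let $P(H)=\{x\in H:\Delta(x)=x\otimes 1+1\otimes x\}$ be its space of primitive elements. Then $\rightharpoonup$ restricts to a linear map $P(H)\otimes P(H)\to P(H)$, and $(P(H),[\cdot,\cdot],\rightharpoonup)$ with $[x,y]=x\cdot y-y\cdot x$ is a post-Lie algebra.
   Context: Conventions: $\Bbbk$ is a field; algebras are associative unital, coalgebras coassociative counital; Sweedler notation $\Delta(c)=c_1\otimes c_2$ (summation omitted), iterated as $c_1\otimes c_2\otimes c_3$ etc.; $H\otimes H$ carries the tensor product coalgebra structure. Definition (Yetter--Drinfeld post-Hopf algebra). A tuple $(H,\cdot,1,\Delta,\epsilon,S,\rightharpoonup)$ where $(H,\cdot,1)$ is an algebra, $(H,\Delta,\epsilon)$ is a coalgebra on the same vector space, $S:H\to H$ is linear with $x_1\cdot S(x_2)=S(x_1)\cdot x_2=\epsilon(x)1$ for all $x$, and $\rightharpoonup:H\otimes H\to H$ is a coalgebra morphism, such that for all $x,y,z\in H$: (P1) $x\rightharpoonup(y\cdot z)=(x_1\rightharpoonup y)\cdot(x_2\rightharpoonup z)$; (P2) $x\rightharpoonup(y\rightharpoonup z)=\big(x_1\cdot(x_2\rightharpoonup y)\big)\rightharpoonup z$; (P3) the map $\alpha_\rightharpoonup:H\to\mathrm{End}(H)$, $\alpha_\rightharpoonup(x)(y)=x\rightharpoonup y$, is convolution invertible, i.e. there is $\beta_\rightharpoonup:H\to\mathrm{End}(H)$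 with $\alpha_\rightharpoonup(x_1)\circ\beta_\rightharpoonup(x_2)=\beta_\rightharpoonup(x_1)\circ\alpha_\rightharpoonup(x_2)=\epsilon(x)\mathrm{Id}_H$; (P4) $\epsilon(a\cdot b)=\epsilon(a)\epsilon(b)$, $\epsilon(1)=1_\Bbbk$, $\Delta(1)=1\otimes 1$; (P5) $\Delta(x\cdot y)=\Big(x_1\cdot\alpha_\rightharpoonup(x_2)\big(\beta_\rightharpoonup(x_4)(y_1)\big)\Big)\otimes(x_3\cdot y_2)$; (P6) setting $x\bullet_\rightharpoonup y:=x_1\cdot(x_2\rightharpoonup y)$, $S_\rightharpoonup(x):=\beta_\rightharpoonup(x_1)(S(x_2))$ and $x\leftharpoonup y:=\big(S_\rightharpoonup(x_1\rightharpoonup y_1)\bullet_\rightharpoonup x_2\big)\bullet_\rightharpoonup y_2$, one has $\Delta(S_\rightharpoonup(x))=S_\rightharpoonup(x_2)\otimes S_\rightharpoonup(x_1)$ and $(x_1\rightharpoonup y_1)\otimes(x_2\leftharpoonup y_2)=(x_2\rightharpoonup y_2)\otimes(x_1\leftharpoonup y_1)$. Definition (post-Lie algebra). A Lie algebra $(\mathfrak g,[\cdot,\cdot])$ with a linear map $\rightharpoonup:\mathfrak g\otimes\mathfrak g\to\mathfrak g$ such that for all $x,y,z$: $x\rightharpoonup[y,z]=[x\rightharpoonup y,z]+[y,x\rightharpoonup z]$ and $\big([x,y]+x\rightharpoonup y-y\rightharpoonup x\big)\rightharpoonup z=x\rightharpoonup(y\rightharpoonup z)-y\rightharpoonup(x\rightharpoonup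 z)$. *)

(* Defs.v *)
From HB Require Import structures.
From mathcomp Require Import all_boot all_order all_algebra.
Set Implicit Arguments. Unset Strict Implicit. Unset Printing Implicit Defensive.
Import GRing.Theory.
Local Open Scope ring_scope.

(* Finite tensors.  An element of V (x) V is represented by a finite    *)
(* list of pairs [(a_i,b_i)] standing for sum_i a_i (x) b_i; two such   *)
(* lists denote the same tensor iff every bilinear map (into any        *)
(* K-vector space W) takes the same value on them (universal property   *)
(* of the tensor product).  Likewise for V (x) V (x) V.                 *)
Section Tensors.
Variables (K : fieldType) (V : lmodType K).

Definition bilinear_to (W : lmodType K) (f : V -> V -> W) : Prop :=
  (forall (a : K) u v w, f (a *: u + v) w = a *: f u w + f v w) /\
  (forall (a : K) u v w, f w (a *: u + v) = a *: f w u + f w v).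

Definition trilinear_to (W : lmodType K) (f : V -> V -> V -> W) : Prop :=
  (forall (a : K) u v w t, f (a *: u + v) w t = a *: f u w t + f v w t) /\
  (forall (a : K) u v w t, f w (a *: u + v) t = a *: f w u t + f w v t) /\
  (forall (a : K) u v w t, f w t (a *: u + v) = a *: f w t u + f w t v).

Definition teq2 (s t : seq (V * V)) : Prop :=
  forall (W : lmodType K) (f : V -> V -> W), bilinear_to f ->
    \sum_(p <- s) f p.1 p.2 = \sum_(p <- t) f p.1 p.2.

Definition teq3 (s t : seq (V * V * V)) : Prop :=
  forall (W : lmodType K) (f : V -> V -> V -> W), trilinear_to f ->
    \sum_(p <- s) f p.1.1 p.1.2 p.2 = \sum_(p <- t) f p.1.1 p.1.2 p.2.

Definition tscale (a : K) (s : seq (V * V)) : seq (V * V) :=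
  [seq (a *: p.1, p.2) | p <- s].

End Tensors.

(* H is an associative unital K-algebra; the coproduct is               *)
(* D : H -> H (x) H (lists of pairs, D x = sum x_1 (x) x_2), the counit *)
(* eps : H -> K, S : H -> H, hr x y = x -> y (the map H (x) H -> H,     *)
(* given as a bilinear map) and beta the convolution inverse of         *)
(* alpha(x) = (x -> _).                                                 *)
Section YD.
Variables (K : fieldType) (H : algType K).
Variables (D : H -> seq (H * H)) (eps : H -> K) (S : H -> H)
          (hr : H -> H -> H) (beta : H -> H -> H).

Definition D2l (x : H) : seq (H * H * H) :=
  flatten [seq [seq (q.1, q.2, p.2) | q <- D p.1] | p <- D x].
Definition D2r (x : H) : seq (H * H * H) :=
  flatten [seq [seq (p.1, q.1, q.2) | q <- D p.2] | p <- D x].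
Definition D3 (x : H) : seq (H * H * H * H) :=
  flatten [seq [seq (q.1, q.2, t.1.2, t.2) | q <- D t.1.1] | t <- D2l x].

Definition bul (x y : H) : H := \sum_(p <- D x) p.1 * hr p.2 y.
Definition Shr (x : H) : H := \sum_(p <- D x) beta p.1 (S p.2).
Definition lhr (x y : H) : H :=
  \sum_(p <- D x) \sum_(q <- D y) bul (bul (Shr (hr p.1 q.1)) p.2) q.2.

Record is_YDPostHopf : Prop := {
  D_linear : forall (a : K) (x y : H),
    teq2 (D (a *: x + y)) (tscale a (D x) ++ D y);
  eps_linear : forall (a : K) (x y : H), eps (a *: x + y) = a * eps x + eps y;
  coassoc : forall x, teq3 (D2l x) (D2r x);
  counit_l : forall x, \sum_(p <- D x) eps p.1 *: p.2 = x;
  counit_r : forall x, \sum_(p <- D x) eps p.2 *: p.1 = x;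
  S_linear : forall (a : K) (x y : H), S (a *: x + y) = a *: S x + S y;
  antipode_l : forall x, \sum_(p <- D x) p.1 * S p.2 = eps x *: 1;
  antipode_r : forall x, \sum_(p <- D x) S p.1 * p.2 = eps x *: 1;
  (* -> : H (x) H -> H linear and a coalgebra morphism (H (x) H with the
     tensor product coalgebra structure) *)
  hr_bilinear : bilinear_to hr;
  hr_coalg_D : forall x y,
    teq2 (D (hr x y)) [seq (hr p.1 q.1, hr p.2 q.2) | p <- D x, q <- D y];
  hr_coalg_eps : forall x y, eps (hr x y) = eps x * eps y;
  P1 : forall x y z, hr x (y * z) = \sum_(p <- D x) hr p.1 y * hr p.2 z;
  P2 : forall x y z, hr x (hr y z) = hr (\sum_(p <- D x) p.1 * hr p.2 y) z;
  beta_bilinear : bilinear_to beta;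
  P3_l : forall x y, \sum_(p <- D x) hr p.1 (beta p.2 y) = eps x *: y;
  P3_r : forall x y, \sum_(p <- D x) beta p.1 (hr p.2 y) = eps x *: y;
  P4_eps_mul : forall a b, eps (a * b) = eps a * eps b;
  P4_eps1 : eps 1 = 1;
  P4_D1 : teq2 (D 1) [:: (1, 1)];
  P5 : forall x y,
    teq2 (D (x * y))
      [seq (u.1.1.1 * hr u.1.1.2 (beta u.2 v.1), u.1.2 * v.2)
         | u <- D3 x, v <- D y];
  P6_S : forall x, teq2 (D (Shr x)) [seq (Shr p.2, Shr p.1) | p <- D x];
  P6_YD : forall x y,
    teq2 [seq (hr p.1 q.1, lhr p.2 q.2) | p <- D x, q <- D y]
         [seq (hr p.2 q.2, lhr p.1 q.1) | p <- D x, q <- D y]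
}.

Definition primitive (x : H) : Prop := teq2 (D x) [:: (x, 1); (1, x)].

End YD.

Record is_postLie (K : fieldType) (V : lmodType K) (P : V -> Prop)
    (br act : V -> V -> V) : Prop := {
  sub0 : P 0;
  subD : forall (a : K) x y, P x -> P y -> P (a *: x + y);
  br_closed : forall x y, P x -> P y -> P (br x y);
  act_closed : forall x y, P x -> P y -> P (act x y);
  br_linear_l : forall (a : K) x y z, P x -> P y -> P z ->
    br (a *: x + y) z = a *: br x z + br y z;
  br_linear_r : forall (a : K) x y z, P x -> P y -> P z ->
    br z (a *: x + y) = a *: br z x + br z y;
  br_alt : forall x, P x -> br x x = 0;
  br_jacobi : forall x y z, P x -> P y -> P z ->
    br x (br y z) + br y (br z x) + br z (br x y) = 0;
  act_linear_l : forall (a : K) x y z, P x -> P y -> P z ->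
    act (a *: x + y) z = a *: act x z + act y z;
  act_linear_r : forall (a : K) x y z, P x -> P y -> P z ->
    act z (a *: x + y) = a *: act z x + act z y;
  postLie_1 : forall x y z, P x -> P y -> P z ->
    act x (br y z) = br (act x y) z + br y (act x z);
  postLie_2 : forall x y z, P x -> P y -> P z ->
    act (br x y + act x y - act y x) z = act x (act y z) - act y (act x z)
}.

(* Main.v *)
Require Import Defs.
From HB Require Import structures.
From mathcomp Require Import all_boot all_order all_algebra.
Import GRing.Theory.
Local Open Scope ring_scope.
Set Implicit Arguments. Unset Strict Implicit.

Definition lin1 (K : fieldType) (U W : lmodType K) (g : U -> W) : Prop :=
  forall (a : K) u v, g (a *: u + v) = a *: g u + g v.
Arguments lin1 {K U W} g : simpl never.

Lemma lin1_0 (K : fieldType) (U W : lmodType K) (g : U -> W) : lin1 g -> g 0 = 0.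
Proof.
move=> hg; have := hg 1 0 0; rewrite !scale1r addr0 => e.
by apply: (addrI (g 0)); rewrite addr0 -e.
Qed.

Lemma lin1_Z (K : fieldType) (U W : lmodType K) (g : U -> W) a u :
  lin1 g -> g (a *: u) = a *: g u.
Proof. by move=> hg; have := hg a u 0; rewrite addr0 lin1_0 // addr0. Qed.

Lemma lin1_D (K : fieldType) (U W : lmodType K) (g : U -> W) u v :
  lin1 g -> g (u + v) = g u + g v.
Proof. by move=> hg; have := hg 1 u v; rewrite !scale1r. Qed.

Lemma lin1_N (K : fieldType) (U W : lmodType K) (g : U -> W) u :
  lin1 g -> g (- u) = - g u.
Proof. by move=> hg; rewrite -scaleN1r lin1_Z // scaleN1r. Qed.

Lemma lin1_B (K : fieldType) (U W : lmodType K) (g : U -> W) u v :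
  lin1 g -> g (u - v) = g u - g v.
Proof. by move=> hg; rewrite lin1_D // lin1_N. Qed.

Lemma bilinP (K : fieldType) (U W : lmodType K) (f : U -> U -> W) :
  (forall w, lin1 (fun u => f u w)) -> (forall w, lin1 (fun u => f w u)) ->
  bilinear_to f.
Proof. by move=> h1 h2; split=> a u v w; [apply: h1|apply: h2]. Qed.

Lemma bil1 (K : fieldType) (U W : lmodType K) (f : U -> U -> W) w :
  bilinear_to f -> lin1 (fun u => f u w).
Proof. by case=> h _ a u v; apply: h. Qed.

Lemma bil2 (K : fieldType) (U W : lmodType K) (f : U -> U -> W) w :
  bilinear_to f -> lin1 (fun u => f w u).
Proof. by case=> _ h a u v; apply: h. Qed.

Lemma lin_id (K : fieldType) (U : lmodType K) : lin1 (fun u : U => u).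
Proof. by []. Qed.

Lemma lin_sum (K : fieldType) (U W : lmodType K) (I : Type) (s : seq I)
  (F : I -> U -> W) : (forall i, lin1 (fun u => F i u)) ->
  lin1 (fun u => \sum_(i <- s) F i u).
Proof.
move=> h a u v; rewrite scaler_sumr -big_split /=.
by apply: eq_bigr => i _; apply: h.
Qed.

Lemma lin_f1 (K : fieldType) (U V W : lmodType K) (f : V -> V -> W) (g : U -> V) w :
  bilinear_to f -> lin1 g -> lin1 (fun u => f (g u) w).
Proof. by move=> hf hg a u v; rewrite hg; case: hf => h _; apply: h. Qed.

Lemma lin_f2 (K : fieldType) (U V W : lmodType K) (f : V -> V -> W) (g : U -> V) w :
  bilinear_to f -> lin1 g -> lin1 (fun u => f w (g u)).
Proof. by move=> hf hg a u v; rewrite hg; case: hf => _ h; apply: h. Qed.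

Lemma lin_mull (K : fieldType) (U : lmodType K) (H : algType K) (g : U -> H) w :
  lin1 g -> lin1 (fun u => w * g u).
Proof. by move=> hg a u v; rewrite hg mulrDr scalerAr. Qed.

Lemma lin_mulr (K : fieldType) (U : lmodType K) (H : algType K) (g : U -> H) w :
  lin1 g -> lin1 (fun u => g u * w).
Proof. by move=> hg a u v; rewrite hg mulrDl scalerAl. Qed.

Lemma bil0l (K : fieldType) (U W : lmodType K) (f : U -> U -> W) w :
  bilinear_to f -> f 0 w = 0.
Proof. by move=> hf; apply: (lin1_0 (bil1 w hf)). Qed.

Lemma bil0r (K : fieldType) (U W : lmodType K) (f : U -> U -> W) w :
  bilinear_to f -> f w 0 = 0.
Proof. by move=> hf; apply: (lin1_0 (bil2 w hf)). Qed.

Lemma bilNl (K : fieldType) (U W : lmodType K) (f : U -> U -> W) u w :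
  bilinear_to f -> f (- u) w = - f u w.
Proof. by move=> hf; apply: (lin1_N u (bil1 w hf)). Qed.

Lemma bilNr (K : fieldType) (U W : lmodType K) (f : U -> U -> W) u w :
  bilinear_to f -> f w (- u) = - f w u.
Proof. by move=> hf; apply: (lin1_N u (bil2 w hf)). Qed.

Lemma bilBl (K : fieldType) (U W : lmodType K) (f : U -> U -> W) u v w :
  bilinear_to f -> f (u - v) w = f u w - f v w.
Proof. by move=> hf; apply: (lin1_B u v (bil1 w hf)). Qed.

Lemma bilBr (K : fieldType) (U W : lmodType K) (f : U -> U -> W) u v w :
  bilinear_to f -> f w (u - v) = f w u - f w v.
Proof. by move=> hf; apply: (lin1_B u v (bil2 w hf)). Qed.

Lemma jac (V : zmodType) (a b c d e g : V) :
  (a - b - (c - d)) + (c - e - (g - b)) + (g - d - (a - e)) = 0.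
Proof.
rewrite !opprB !addrA.
rewrite (ACl ((1*12)*(2*7)*(3*10)*(4*5)*(6*11)*(8*9))%AC) /=.
by rewrite !addrN !addNr !addr0.
Qed.

Lemma grp1 (V : zmodType) (a b c d e g : V) :
  (a + c + b + d) - (e + b + c + g) = (a - e) + (d - g).
Proof.
rewrite !opprD !addrA.
rewrite [LHS](ACl ((1*5)*(4*8)*(2*7)*(3*6))%AC) /=.
by rewrite !addrN !addr0 addrA.
Qed.

Lemma sumsp (K : fieldType) (H : algType K) (W : lmodType K) (s : seq (H * H)) (F : H * H -> W) :
  \sum_(p <- s) F (p.1, p.2) = \sum_(p <- s) F p.
Proof. by apply: eq_bigr => -[]. Qed.

Ltac lt hd := simpl; first
 [ exact: lin_id
 | apply: lin_sum => ?; lt hd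
 | apply: hd; apply: bilinP => ?; lt hd
 | apply: lin_mull; lt hd
 | apply: lin_mulr; lt hd
 | apply: lin_f1; [assumption | lt hd]
 | apply: lin_f2; [assumption | lt hd] ].

Ltac bt hd := apply: bilinP => ?; lt hd.

Unset Implicit Arguments.

Theorem mainTheorem4 (K : fieldType) (H : algType K)
    (D : H -> seq (H * H)) (eps : H -> K) (S : H -> H)
    (hr : H -> H -> H) (beta : H -> H -> H) :
  is_YDPostHopf D eps S hr beta ->
  (forall x y : H, primitive D x -> primitive D y -> primitive D (hr x y)) /\
  is_postLie (primitive D) (fun x y : H => x * y - y * x) hr.
Proof.
move=> Y.
have [Dl el coas cl cr Sl al ar hb hrD hre P1 P2 bb P3l P3r P4m P41 P4D P5 P6S P6YD] := Y.
have HD : forall (W : lmodType K) (F : H * H -> W),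
    bilinear_to (fun a b => F (a, b)) -> lin1 (fun u => \sum_(p <- D u) F p).
  move=> W F hF a u v; have := Dl a u v W _ hF.
  rewrite /tscale big_cat big_map /= !sumsp => ->; congr (_ + _).
  rewrite scaler_sumr; apply: eq_bigr => -[p1 p2] _ /=.
  by rewrite (lin1_Z _ _ (bil1 _ hF)).
have HD1 : forall (W : lmodType K) (F : H * H -> W),
    bilinear_to (fun a b => F (a, b)) -> \sum_(p <- D 1) F p = F (1, 1).
  move=> W F hF; have := P4D W _ hF.
  by rewrite big_cons big_nil addr0 /= sumsp.
have HP : forall x, primitive D x -> forall (W : lmodType K) (F : H * H -> W),
    bilinear_to (fun a b => F (a, b)) -> \sum_(p <- D x) F p = F (x, 1) + F (1, x).
  move=> x hx W F hF; have := hx W _ hF.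
  by rewrite !big_cons big_nil addr0 /= sumsp.
have e1 : forall y, hr 1 (beta 1 y) = y.
  move=> y; have := P3l 1 y.
  rewrite (HD1 _ (fun p : H * H => hr p.1 (beta p.2 y))) /= ?P41 ?scale1r //.
  by bt HD.
have e2 : forall y, beta 1 (hr 1 y) = y.
  move=> y; have := P3r 1 y.
  rewrite (HD1 _ (fun p : H * H => beta p.1 (hr p.2 y))) /= ?P41 ?scale1r //.
  by bt HD.
have m1 : forall y z, hr 1 (y * z) = hr 1 y * hr 1 z.
  move=> y z; rewrite P1.
  rewrite (HD1 _ (fun p : H * H => hr p.1 y * hr p.2 z)) //.
  by bt HD.
have w1 : hr 1 1 = 1.
  have := m1 1 (beta 1 1); rewrite mul1r e1 mulr1 => e.
  by rewrite -e.
have hr1 : forall y, hr 1 y = y.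
  move=> z; have := P2 1 1 z.
  rewrite (HD1 _ (fun p : H * H => p.1 * hr p.2 1)) /=; last by bt HD.
  by rewrite w1 mul1r => /(congr1 (beta 1)); rewrite !e2.
have b1 : forall y, beta 1 y = y.
  by move=> y; rewrite -{2}(e1 y) hr1.
have hx1 : forall x, primitive D x -> hr x 1 = 0.
  move=> x hx; have := P1 x 1 1.
  rewrite mulr1 (HP x hx _ (fun p : H * H => hr p.1 1 * hr p.2 1)) /=; last by bt HD.
  rewrite !hr1 mulr1 mul1r => e.
  by apply: (addrI (hr x 1)); rewrite addr0 -e.
have ex : forall x, primitive D x -> eps x *: (1 : H) = 0.
  move=> x hx; have := cl x.
  rewrite (HP x hx _ (fun p : H * H => eps p.1 *: p.2)) /=; last first.
    apply: bilinP => w a u v /=; first by rewrite el scalerDl scalerA.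
    by rewrite scalerDr !scalerA mulrC.
  rewrite P41 scale1r => e.
  by apply: (addIr x); rewrite add0r.
have bx : forall x y, primitive D x -> beta x y = - hr x y.
  move=> x y hx; have := P3r x y.
  rewrite (HP x hx _ (fun p : H * H => beta p.1 (hr p.2 y))) /=; last by bt HD.
  have -> : eps x *: y = 0 by rewrite -[y]mul1r scalerAl ex // mul0r.
  by rewrite hr1 b1 => /eqP; rewrite addr_eq0 => /eqP.
have part1 : forall x y : H, primitive D x -> primitive D y -> primitive D (hr x y).
  move=> x y hx hy W f hf; have := hrD x y W f hf.
  rewrite big_allpairs_dep /= => ->.
  rewrite !big_cons big_nil addr0 /=.
  rewrite (HP x hx _ (fun p : H * H => \sum_(q <- D y) f (hr p.1 q.1) (hr p.2 q.2))) /=;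
    last by bt HD.
  rewrite !(HP y hy) /=; try by bt HD.
  rewrite !hr1 !hx1 // (bil0l _ hf) (bil0r _ hf).
  by rewrite addr0 add0r.
have prod : forall x y : H, primitive D x -> primitive D y ->
    forall (W : lmodType K) (f : H -> H -> W), bilinear_to f ->
    \sum_(p <- D (x * y)) f p.1 p.2 =
      f (x * y) 1 + f x y + f y x + f 1 (x * y).
  move=> x y hx hy W f hf; have := P5 x y W f hf.
  rewrite big_allpairs_dep /= => ->.
  rewrite /D3 big_flatten big_map /=.
  under eq_bigr => t _ do rewrite big_map /=.
  rewrite /D2l big_flatten big_map /=.
  under eq_bigr => t _ do rewrite big_map /=.
  rewrite (HP x hx) /=; last by bt HD.
  rewrite (HP x hx) /=; last by bt HD.
  rewrite (HP x hx) /=; last by bt HD.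
  rewrite !HD1 /=; try by bt HD.
  rewrite !(HP y hy) /=; try by bt HD.
  rewrite !hr1 !b1 !bx // !hx1 // oppr0 !mul1r !mulr1 ?hr1 ?(bil0l _ hf) ?(bil0r _ hf).
  rewrite !addr0 (bilNl _ _ hf) addrAC -(addrA _ (f (hr x y) 1)) addrN addr0.
  by rewrite !addrA.
have SDl : forall (W : lmodType K) (f : H -> H -> W), bilinear_to f ->
    lin1 (fun u => \sum_(p <- D u) f p.1 p.2).
  by move=> W f hf; apply: (HD W (fun p => f p.1 p.2) hf).
split; first exact: part1.
constructor.
- move=> W f hf; rewrite !big_cons big_nil addr0 /= (bil0l _ hf) (bil0r _ hf) addr0.
  exact: (lin1_0 (SDl W f hf)).
- move=> a x y hx hy W f hf.
  transitivity (a *: \sum_(p <- D x) f p.1 p.2 + \sum_(p <- D y) f p.1 p.2).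
    exact: (SDl W f hf).
  rewrite (hx W f hf) (hy W f hf) !big_cons !big_nil !addr0 /=.
  case: (hf) => h1 h2; rewrite h1 h2.
  by rewrite scalerDr addrACA.
- move=> x y hx hy W f hf.
  transitivity (\sum_(p <- D (x * y)) f p.1 p.2 - \sum_(p <- D (y * x)) f p.1 p.2).
    exact: (lin1_B _ _ (SDl W f hf)).
  rewrite !prod // !big_cons big_nil addr0 /= (bilBl _ _ _ hf) (bilBr _ _ _ hf).
  by rewrite grp1.
- exact: part1.
- move=> a x y z _ _ _.
  by rewrite mulrDl mulrDr -scalerAl -scalerAr scalerBr opprD addrACA.
- move=> a x y z _ _ _.
  by rewrite mulrDr mulrDl -scalerAr -scalerAl scalerBr opprD addrACA.
- by move=> x _; exact: subrr.
- move=> x y z _ _ _; rewrite !mulrBr !mulrBl !mulrA; exact: jac.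
- by move=> a x y z _ _ _; case: hb => h _; apply: h.
- by move=> a x y z _ _ _; case: hb => _ h; apply: h.
- move=> x y z hx hy hz.
  rewrite (bilBr _ _ _ hb) !P1 !(HP x hx) /=; try by bt HD.
  rewrite !hr1 (addrC (hr x z * y)) opprD addrACA.
  done.
- move=> x y z hx hy hz.
  rewrite !P2 (HP x hx) /=; last by bt HD.
  rewrite (HP y hy) /=; last by bt HD.
  rewrite !hr1 !mul1r -(bilBl _ _ _ hb); congr (hr _ z).
  by rewrite opprD addrACA !addrA.
Qed.
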